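(* Let $k$ be an algebraically closed field of characteristic zero and let $X$ be a smooth affine $k$-variety. Then $\mathcal{O}_{ch}(X)=\mathcal{O}_{ch}(X\times_k\mathbb{A}^1_k)$ as $k$-subalgebras of $\mathcal{O}(X\times_k\mathbb{A}^1_k)$, where $\mathcal{O}(X)$ is identified with a subalgebra via pullback along the projection $X\times_k\mathbb{A}^1_k\to X$.
   Context: For an affine $k$-variety $Z$ and a $k$-morphism $g:\mathbb{A}^1_k\to Z$, $\mathcal{O}_{ch,g}(Z)=\{f\in\mathcal{O}(Z): f\circ g\text{ is constant}\}$, and $\mathcal{O}_{ch}(Z)=\bigcap_g\mathcal{O}_{ch,g}(Z)$ over all $k$-morphisms $g:\mathbb{A}^1_k\to Z$. *)

(* Defs.v *)
From HB Require Import structures.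
From mathcomp Require Import all_boot all_algebra.
From mathcomp Require Import mpoly.
Set Implicit Arguments. Unset Strict Implicit. Unset Printing Implicit Defensive.
Import GRing.Theory.
Local Open Scope ring_scope.

(* Classical (point-set) affine algebraic geometry over an algebraically
   closed field k: an affine k-variety is a Zariski-closed subset of k^n,
   its regular functions are represented by polynomials (two polynomials
   give the same regular function iff they agree on all points). *)
Section AffGeom.
Variable k : closedFieldType.

Definition pt (n : nat) := 'I_n -> k.

Definition zero_set n (S : seq {mpoly k[n]}) : pt n -> Prop :=
  fun x => forall p, p \in S -> p.@[x] = 0.

Definition zclosed n (Z : pt n -> Prop) : Prop :=
  exists S : seq {mpoly k[n]}, forall x, Z x <-> zero_set S x.

Definition psubset n (Z W : pt n -> Prop) := forall x, Z x -> W x.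
Definition pstrict n (Z W : pt n -> Prop) :=
  psubset Z W /\ exists x, W x /\ ~ Z x.

Definition zirreducible n (Z : pt n -> Prop) : Prop :=
  zclosed Z /\ (exists x, Z x) /\
  forall Z1 Z2 : pt n -> Prop, zclosed Z1 -> zclosed Z2 ->
    (forall x, Z x -> Z1 x \/ Z2 x) -> psubset Z Z1 \/ psubset Z Z2.

Definition chain_at n (X : pt n -> Prop) (x : pt n) (m : nat) : Prop :=
  exists Zs : nat -> (pt n -> Prop),
    (forall i, (i <= m)%N -> zirreducible (Zs i) /\ psubset (Zs i) X) /\
    Zs 0%N x /\ (forall i, (i < m)%N -> pstrict (Zs i) (Zs i.+1)).

Definition local_dim n (X : pt n -> Prop) (x : pt n) (d : nat) : Prop :=
  chain_at X x d /\ ~ chain_at X x d.+1.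

Definition vanishes n (X : pt n -> Prop) (p : {mpoly k[n]}) : Prop :=
  forall x, X x -> p.@[x] = 0.

Definition tangent_vec n (X : pt n -> Prop) (x : pt n) (v : 'rV[k]_n) : Prop :=
  forall p, vanishes X p -> \sum_(i < n) (p^`M(i)).@[x] * v 0 i = 0.

(* dim_k T_x X = d : T_x X has a basis given by the rows of a d x n matrix *)
Definition tangent_dim n (X : pt n -> Prop) (x : pt n) (d : nat) : Prop :=
  exists M : 'M[k]_(d, n),
    (forall j, tangent_vec X x (row j M)) /\ \rank M = d /\
    (forall v, tangent_vec X x v -> (v <= M)%MS).

Definition smooth_at n (X : pt n -> Prop) (x : pt n) : Prop :=
  exists d, local_dim X x d /\ tangent_dim X x d.

Definition smooth n (X : pt n -> Prop) : Prop := forall x, X x -> smooth_at X x.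

(* k-morphisms A^1 -> Z, given by polynomial coordinates *)
Definition curve_eval n (g : 'I_n -> {poly k}) (t : k) : pt n := fun i => (g i).[t].

Definition curve_in n (Z : pt n -> Prop) (g : 'I_n -> {poly k}) : Prop :=
  forall t, Z (curve_eval g t).

Definition Och n (Z : pt n -> Prop) (f : {mpoly k[n]}) : Prop :=
  forall g, curve_in Z g -> exists c : k, forall t, f.@[curve_eval g t] = c.

Definition proj1A n (y : pt n.+1) : pt n := fun i => y (widen_ord (leqnSn n) i).

Definition prodA1 n (X : pt n -> Prop) : pt n.+1 -> Prop := fun y => X (proj1A y).

End AffGeom.

(* Main.v *)
Require Import Defs.
From HB Require Import structures.
From mathcomp Require Import all_boot all_algebra.
From mathcomp Require Import mpoly.
Local Open Scope ring_scope.

Section Aux.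
Variable k : closedFieldType.
Variable n : nat.

Definition ext (x : pt k n) (t : k) : pt k n.+1 :=
  fun i => if @insub _ (fun m => (m < n)%N) 'I_n (val i) is Some j then x j else t.

Lemma proj1A_ext x t : proj1A (ext x t) =1 x.
Proof.
move=> j; rewrite /proj1A /ext /=.
case: insubP => [j' _ hj|]; first by congr x; apply: val_inj.
by rewrite /= ltn_ord.
Qed.

Lemma ext_proj1A (y : pt k n.+1) : y =1 ext (proj1A y) (y ord_max).
Proof.
move=> i; rewrite /ext /proj1A.
case: insubP => [j _ hj|].
  by congr y; apply: val_inj; rewrite /= hj.
rewrite -leqNgt => hi; congr y; apply: val_inj => /=.
by apply/eqP; rewrite eqn_leq hi -ltnS ltn_ord.
Qed.

Lemma zero_set_ext (S : seq {mpoly k[n]}) x y : x =1 y -> zero_set S x -> zero_set S y.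
Proof. by move=> e h p hp; rewrite -(meval_eq p e); apply: h. Qed.

End Aux.

Arguments ext {k n}.
Arguments proj1A_ext {k n}.
Arguments zero_set_ext {k n S x y}.
Arguments ext_proj1A {k n}.

Theorem proposition6p11 (k : closedFieldType) (hchar : [pchar k] =i pred0)
  (n : nat) (S : seq {mpoly k[n]}) (hX : smooth (zero_set S)) :
  forall q : {mpoly k[n.+1]},
    Och (prodA1 (zero_set S)) q <->
    exists p : {mpoly k[n]}, Och (zero_set S) p /\
      (forall y, prodA1 (zero_set S) y -> q.@[y] = p.@[proj1A y]).
Proof.
move=> q; split; last first.
  move=> [p [hp hq]] G hG.
  have hg : curve_in (zero_set S) (fun j => G (widen_ord (leqnSn n) j)).
    by move=> t; apply: (hG t).
  have [c hc] := hp _ hg.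
  by exists c => t; rewrite hq; [apply: hc | apply: hG].
move=> hq.
pose lq : (n.+1).-tuple {mpoly k[n]} :=
  [tuple if @insub _ (fun m => (m < n)%N) 'I_n (val i) is Some j then 'X_j else 0 | i < n.+1].
have hev : forall x, (q \mPo lq).@[x] = q.@[ext x 0].
  move=> x; rewrite comp_mpoly_meval; apply: meval_eq => i.
  rewrite tnth_map /ext tnth_ord_tuple.
  by case: insub => [j|]; rewrite ?mevalXU ?meval0.
have hcst : forall x t, zero_set S x -> q.@[ext x t] = q.@[ext x 0].
  move=> x t hx.
  pose G : 'I_n.+1 -> {poly k} := fun i =>
    if @insub _ (fun m => (m < n)%N) 'I_n (val i) is Some j then (x j)%:P else 'X.
  have eG : forall s, curve_eval G s =1 ext x s.
    move=> s i; rewrite /curve_eval /G /ext.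
    by case: insub => [j|]; rewrite ?hornerC ?hornerX.
  have hG : curve_in (prodA1 (zero_set S)) G.
    move=> s; rewrite /prodA1.
    apply: (zero_set_ext _ hx) => j.
    by rewrite /proj1A eG -(proj1A_ext x s j).
  have [c hc] := hq _ hG.
  by rewrite -(meval_eq q (eG t)) -(meval_eq q (eG 0)) !hc.
exists (q \mPo lq); split.
  move=> g hg.
  pose G : 'I_n.+1 -> {poly k} := fun i =>
    if @insub _ (fun m => (m < n)%N) 'I_n (val i) is Some j then g j else 0.
  have eG : forall s, curve_eval G s =1 ext (curve_eval g s) 0.
    move=> s i; rewrite /curve_eval /G /ext.
    by case: insub => [j|]; rewrite ?horner0.
  have hG : curve_in (prodA1 (zero_set S)) G.
    move=> s; rewrite /prodA1.
    apply: (zero_set_ext _ (hg s)) => j.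
    by rewrite /proj1A eG -(proj1A_ext (curve_eval g s) 0 j).
  have [c hc] := hq _ hG.
  by exists c => t; rewrite hev -(meval_eq q (eG t)) hc.
move=> y hy.
by rewrite hev (meval_eq q (ext_proj1A y)) hcst.
Qed.
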